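(* For every set $I\subseteq[n]$ of $k$ distinct participants, the secret $\mathbf s$ is uniquely determined by the shares $(t_i)_{i\in I}$: there is a function $g_I$ such that $g_I((t_i)_{i\in I})=\mathbf s$ for all values of $\mathbf s$ and of the random entries of $M$.
   Context: Fix integers $n\ge k\ge 2$ and $d\ge k$, and a finite field $\mathbb{F}_q$ with $q>n$ (the integers $1,\dots,n$ are regarded as distinct elements of $\mathbb{F}_q$). For $i\in[n]=\{1,\dots,n\}$ let $\psi_i=(1,i,i^2,\dots,i^{d-1})^T\in\mathbb{F}_q^d$. The secret is $\mathbf s=(s_1,\dots,s_{d-k+1})\in\mathbb{F}_q^{d-k+1}$; write $s_A=s_{d-k+1}\in\mathbb{F}_q$ and $s_B=(s_1,\dots,s_{d-k})^T\in\mathbb{F}_q^{d-k}$. The dealer forms the symmetric $d\times d$ matrix $$M=\begin{pmatrix} s_A & r_a^T & s_B^T\\ r_a & R_b & R_c^T\\ s_B & R_c & 0\end{pmatrix}$$ with row/column blocks of sizes $1,\,k-1,\,d-k$, where $r_a\in\mathbb{F}_q^{k-1}$, $R_b$ is a symmetric $(k-1)\times(k-1)$ matrix, $R_c$ is a $(d-k)\times(k-1)$ matrix, and $0$ is the $(d-k)\times(d-k)$ zero matrix; the $R=(k-1)d-\binom{k-1}{2}$ free entries of $r_a,R_b,R_c$ (for $R_b$: the entries on and above the diagonal) are independent, uniform on $\mathbb{F}_q$, and independent of $\mathbf s$. The share of participant $j$ is $t_j^T=\psi_j^T N$, where $N=\begin{pmatrix} s_A & s_B^T\\ r_a & R_c^T\\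 s_B & 0\end{pmatrix}$ is the $d\times(d-k+1)$ matrix formed by the first column and the last $d-k$ columns of $M$. *)

(* Defs.v *)
From HB Require Import structures.
From mathcomp Require Import all_boot all_order all_algebra all_field.
Set Implicit Arguments. Unset Strict Implicit. Unset Printing Implicit Defensive.
Import GRing.Theory.
Local Open Scope ring_scope.

Section Scheme.
Variables (F : fieldType) (k d : nat).

(* total accessor of a matrix entry at natural-number indices
   (only ever used with in-range indices below) *)
Definition mget m p (A : 'M[F]_(m, p)) (i j : nat) : F :=
  match insub i, insub j with
  | Some i', Some j' => A i' j'
  | _, _ => 0
  end.

Definition psi (x : F) : 'rV[F]_d := \row_(l < d) x ^+ l.

(* secret s = (s_1, ..., s_(d-k+1)), stored 0-indexed *)
Definition sA (s : 'rV[F]_(d - k + 1)) : F := mget s 0 (d - k).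
Definition sB (s : 'rV[F]_(d - k + 1)) (l : nat) : F := mget s 0 l.

(* The symmetric d x d dealer matrix M, with blocks of sizes 1, k-1, d-k.
   ra : 'cV_(k-1), Rb : 'M_(k-1), Rc : 'M_(d-k, k-1). *)
Definition dealerM (s : 'rV[F]_(d - k + 1)) (ra : 'cV[F]_(k.-1))
  (Rb : 'M[F]_(k.-1)) (Rc : 'M[F]_(d - k, k.-1)) : 'M[F]_d :=
  \matrix_(i < d, j < d)
    if (i == 0%N :> nat) then
      (if (j == 0%N :> nat) then sA s
       else if (j < k)%N then mget ra j.-1 0
       else sB s (j - k))
    else if (i < k)%N then
      (if (j == 0%N :> nat) then mget ra i.-1 0
       else if (j < k)%N then mget Rb i.-1 j.-1
       else mget Rc (j - k) i.-1)
    else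
      (if (j == 0%N :> nat) then sB s (i - k)
       else if (j < k)%N then mget Rc (i - k) j.-1
       else 0).

(* N = first column and last d-k columns of M *)
Definition dealerN (s : 'rV[F]_(d - k + 1)) ra Rb Rc : 'M[F]_(d, d - k + 1) :=
  \matrix_(i < d, c < d - k + 1)
    mget (dealerM s ra Rb Rc) i (if c == 0%N :> nat then 0%N else (k + c - 1)%N).

Definition share (x : F) s ra Rb Rc : 'rV[F]_(d - k + 1) :=
  psi x *m dealerN s ra Rb Rc.

End Scheme.

(* Main.v *)
Require Import Defs.
From HB Require Import structures.
From mathcomp Require Import all_boot all_order all_algebra all_field.
From mathcomp Require Import zify.
Import GRing.Theory.
Local Open Scope ring_scope.

Lemma mgetE (F : fieldType) m p (A : 'M[F]_(m, p)) i j (Hi : (i < m)%N) (Hj : (j < p)%N) :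
  mget A i j = A (Ordinal Hi) (Ordinal Hj).
Proof.
rewrite /mget insubT insubT /=; congr (A _ _); exact: val_inj.
Qed.

Lemma NE {F : fieldType} {k d} s ra Rb Rc (i c : nat) :
  (2 <= k)%N -> (k <= d)%N -> (i < d)%N -> (c < d - k + 1)%N ->
  mget (@dealerN F k d s ra Rb Rc) i c =
  if (i == 0%N) then (if c == 0%N then sA s else sB s c.-1)
  else if (i < k)%N then (if c == 0%N then mget ra i.-1 0 else mget Rc c.-1 i.-1)
  else (if c == 0%N then sB s (i - k) else 0).
Proof.
move=> Hk Hkd Hi Hc.
rewrite (@mgetE _ _ _ _ _ _ Hi Hc) mxE /=.
have Hj : ((if c == 0%N then 0%N else (k + c - 1)%N) < d)%N.
  case: eqP => _; first by lia.
  by lia.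
rewrite (@mgetE _ _ _ _ _ _ Hi Hj) mxE /=.
case Hc0: (c == 0%N) => /=; first by [].
move: Hc0 => /negbT /eqP Hc0.
have -> : ((k + c - 1)%N == 0%N) = false by apply/eqP; lia.
have -> : ((k + c - 1)%N < k)%N = false by apply/negbTE; rewrite -leqNgt; lia.
have -> : (k + c - 1 - k = c.-1)%N by lia.
done.
Qed.

Definition Pc (F : fieldType) k d s ra Rb Rc (c : nat) : {poly F} :=
  \poly_(i < d) mget (@dealerN F k d s ra Rb Rc) i c.
Arguments Pc {F k d}.

Lemma shareE (F : fieldType) k d (x : F) s ra Rb Rc (cc : 'I_(d - k + 1)) :
  (@share F k d x s ra Rb Rc) 0 cc = (Pc s ra Rb Rc cc).[x].
Proof.
rewrite /share /Pc mxE horner_poly; apply: eq_bigr => j _.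
rewrite mxE (@mgetE _ _ _ _ _ _ (ltn_ord j) (ltn_ord cc)) mulrC; congr (_ * _).
by congr (dealerN _ _ _ _ _ _); apply: val_inj.
Qed.

Lemma inj_key (F : fieldType) k d (rs : seq F) s ra Rb Rc s' ra' Rb' Rc' :
  (2 <= k)%N -> (k <= d)%N -> uniq rs -> size rs = k ->
  (forall x, x \in rs -> @share F k d x s ra Rb Rc = @share F k d x s' ra' Rb' Rc') ->
  s = s'.
Proof.
move=> Hk Hkd Hu Hs Heq.
have Hzero : forall c : 'I_(d - k + 1),
    (forall j, (k <= j)%N -> (j < d)%N ->
       mget (@dealerN F k d s ra Rb Rc) j c = mget (@dealerN F k d s' ra' Rb' Rc') j c) ->
    Pc s ra Rb Rc c = Pc s' ra' Rb' Rc' c.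
  move=> c Hc; apply/eqP; rewrite -subr_eq0; apply/eqP.
  apply: (roots_geq_poly_eq0 (rs := rs)) => //.
  - apply/allP => x Hx; rewrite /root hornerD hornerN -!shareE (Heq x Hx) subrr //.
  - rewrite Hs; apply/leq_sizeP => j Hj.
    rewrite coefB /Pc !coef_poly; case: ifP => Hjd; last by rewrite subrr.
    by rewrite (Hc j Hj Hjd) subrr.
have coef0 : forall c : 'I_(d - k + 1), Pc s ra Rb Rc c = Pc s' ra' Rb' Rc' c ->
    mget (@dealerN F k d s ra Rb Rc) 0 c = mget (@dealerN F k d s' ra' Rb' Rc') 0 c.
  move=> c0 /(congr1 (fun p : {poly F} => p`_0)); rewrite /Pc !coef_poly.
  by have -> : (0 < d)%N by lia.
have HB : forall l, (l < d - k)%N -> sB s l = sB s' l.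
  move=> l Hl.
  have Hc : (l.+1 < d - k + 1)%N by lia.
  have H1 : forall j, (k <= j)%N -> (j < d)%N ->
       mget (@dealerN F k d s ra Rb Rc) j (Ordinal Hc) = mget (@dealerN F k d s' ra' Rb' Rc') j (Ordinal Hc).
    move=> j Hj Hjd; rewrite /= !NE //; try lia.
    have -> : (j == 0%N) = false by apply/eqP; lia.
    by have -> : (j < k)%N = false by apply/negbTE; rewrite -leqNgt.
  have := coef0 (Ordinal Hc) (Hzero (Ordinal Hc) H1).
  by rewrite /= !NE //; lia.
have HA : sA s = sA s'.
  have Hc : (0 < d - k + 1)%N by lia.
  have H1 : forall j, (k <= j)%N -> (j < d)%N ->
       mget (@dealerN F k d s ra Rb Rc) j (Ordinal Hc) = mget (@dealerN F k d s' ra' Rb' Rc') j (Ordinal Hc).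
    move=> j Hj Hjd; rewrite /= !NE //; try lia.
    have -> : (j == 0%N) = false by apply/eqP; lia.
    have -> : (j < k)%N = false by apply/negbTE; rewrite -leqNgt.
    by apply: HB; lia.
  have := coef0 (Ordinal Hc) (Hzero (Ordinal Hc) H1).
  by rewrite /= !NE //; lia.
apply/rowP => c.
have Hr0 : (0 < 1)%N by [].
case: (ltnP c (d - k)) => Hc.
  have := HB c Hc; rewrite /sB !(@mgetE _ _ _ _ _ _ Hr0 (ltn_ord c)).
  have -> : Ordinal Hr0 = 0 by apply: val_inj.
  by have -> : Ordinal (ltn_ord c) = c by apply: val_inj.
have Hcd : (d - k < d - k + 1)%N by lia.
move: HA; rewrite /sA !(@mgetE _ _ _ _ _ _ Hr0 Hcd).
have -> : Ordinal Hr0 = 0 by apply: val_inj.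
by have -> : Ordinal Hcd = c by apply: val_inj => /=; have := ltn_ord c; lia.
Qed.

Theorem theorem2 (F : finFieldType) (n k d : nat)
  (Hk2 : (2 <= k)%N) (Hkn : (k <= n)%N) (Hkd : (k <= d)%N)
  (Hq : (n < #|F|)%N)
  (Hdist : injective (fun j : 'I_n => (j.+1)%:R : F))
  (I : {set 'I_n}) (HI : #|I| = k) :
  exists g : ({j : 'I_n | j \in I} -> 'rV[F]_(d - k + 1)) -> 'rV[F]_(d - k + 1),
    forall (s : 'rV[F]_(d - k + 1)) (ra : 'cV[F]_(k.-1))
           (Rb : 'M[F]_(k.-1)) (Rc : 'M[F]_(d - k, k.-1)),
      Rb^T = Rb ->
      g (fun j => @share F k d ((val j).+1%:R) s ra Rb Rc) = s.
Proof.
pose T := ('rV[F]_(d - k + 1) * 'cV[F]_(k.-1) * 'M[F]_(k.-1) * 'M[F]_(d - k, k.-1))%type.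
exists (fun t => match [pick p : T | [forall j : {j : 'I_n | j \in I},
           @share F k d ((val j).+1%:R) p.1.1.1 p.1.1.2 p.1.2 p.2 == t j]] with
         | Some p => p.1.1.1 | None => 0 end).
move=> s ra Rb Rc _.
case: pickP => [[[[s' ra'] Rb'] Rc'] /= /forallP Hp | Hnone]; last first.
  have := Hnone (s, ra, Rb, Rc); rewrite /=.
  by have -> : [forall j : {j : 'I_n | j \in I}, @share F k d ((val j).+1%:R) s ra Rb Rc == @share F k d ((val j).+1%:R) s ra Rb Rc] by apply/forallP => j.
apply: (@inj_key F k d [seq (val j).+1%:R | j : {j : 'I_n | j \in I}] s' ra' Rb' Rc' s ra Rb Rc) => //.
- rewrite map_inj_uniq ?enum_uniq // => x y /Hdist; exact: val_inj.
- by rewrite size_map -cardE card_sig.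
- by move=> x /mapP [j _ ->]; move: (Hp j) => /eqP.
Qed.
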